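(* For integers $n,m\ge 3$, ${\rm dim}_s(K_{n,n}^{-M}\diamond K_{m,m}^{-M})=3nm$.
   Context: The modular product $G\diamond H$ has vertex set $V(G)\times V(H)$; distinct vertices $(g,h)$ and $(g',h')$ are adjacent iff ($g=g'$ and $hh'\in E(H)$), or ($gg'\in E(G)$ and $h=h'$), or ($gg'\in E(G)$ and $hh'\in E(H)$), or ($g\neq g'$, $h\neq h'$, $gg'\notin E(G)$ and $hh'\notin E(H)$). $K_{n,n}^{-M}$ is $K_{n,n}$ with a perfect matching removed. ${\rm dim}_s(X)$ is the strong metric dimension: the minimum size of $S\subseteq V(X)$ such that for all distinct $x,y$ some $z\in S$ has $d_X(y,z)=d_X(y,x)+d_X(x,z)$ or $d_X(x,z)=d_X(x,y)+d_X(y,z)$. *)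

(* Defs.v *)
From mathcomp Require Import all_boot.
Set Implicit Arguments. Unset Strict Implicit. Unset Printing Implicit Defensive.

Fixpoint walkb (T : finType) (e : rel T) (k : nat) (x y : T) : bool :=
  match k with
  | 0 => x == y
  | k'.+1 => [exists z, e x z && walkb e k' z y]
  end.

(* Graph distance: least k (< #|T|) with a walk of length k from x to y;
   #|T| (a stand-in for infinity) if y is unreachable from x. *)
Definition gdist (T : finType) (e : rel T) (x y : T) : nat :=
  find (fun k => walkb e k x y) (iota 0 #|T|).

Definition strong_resolving (T : finType) (e : rel T) (S : {set T}) : bool :=
  [forall x : T, forall y : T, (x != y) ==>
    [exists z in S,
      (gdist e y z == gdist e y x + gdist e x z) ||
      (gdist e x z == gdist e x y + gdist e y z)]].

(* Strong metric dimension: minimum size of a strong resolving set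
   (the full vertex set is always strong resolving, so this is a genuine min). *)
Definition sdim (T : finType) (e : rel T) : nat :=
  find (fun k => [exists S : {set T}, strong_resolving e S && (#|S| == k)])
       (iota 0 #|T|.+1).

Definition modprod (T1 T2 : finType) (g : rel T1) (h : rel T2) :
    rel (T1 * T2) :=
  fun u v =>
    [|| (u.1 == v.1) && h u.2 v.2,
        g u.1 v.1 && (u.2 == v.2),
        g u.1 v.1 && h u.2 v.2
      | [&& u.1 != v.1, u.2 != v.2, ~~ g u.1 v.1 & ~~ h u.2 v.2]].

(* K_{n,n} minus a perfect matching: vertices (side, index); (s,i) ~ (t,j)
   iff s <> t and i <> j (the removed matching is {(false,i),(true,i)}). *)
Definition KnnM (n : nat) : rel (bool * 'I_n) :=
  fun u v => (u.1 != v.1) && (u.2 != v.2).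
Arguments KnnM n : clear implicits.

(* Main.v *)
Require Import Defs.
From mathcomp Require Import all_boot zify.
Set Implicit Arguments. Unset Strict Implicit. Unset Printing Implicit Defensive.

Lemma find_iota0 (P : pred nat) N k : k < N -> P k ->
  (forall k', k' < k -> ~~ P k') -> find P (iota 0 N) = k.
Proof.
move=> kN Pk H.
have -> : N = k + (N - k) by rewrite subnKC // ltnW.
rewrite iotaD find_cat.
have -> : has P (iota 0 k) = false.
  apply/hasPn => x; rewrite mem_iota add0n => /andP[_]; exact: H.
rewrite size_iota add0n.
case E: (N - k) => [|p]; first by move: kN; rewrite -subn_gt0 E.
by rewrite /= Pk addn0.
Qed.

Lemma gdist_char (T : finType) (e : rel T) x y k : k < #|T| -> walkb e k x y ->
  (forall k', k' < k -> ~~ walkb e k' x y) -> gdist e x y = k.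
Proof. by move=> *; apply: find_iota0. Qed.

Lemma walk1E (T : finType) (e : rel T) x y : walkb e 1 x y = e x y.
Proof.
apply/existsP/idP => [[z /andP[h /eqP<-]]|h] //; exists y; by rewrite h eqxx.
Qed.

Lemma walk2I (T : finType) (e : rel T) x z y : e x z -> e z y -> walkb e 2 x y.
Proof. by move=> h1 h2; apply/existsP; exists z; rewrite h1 /=; apply/existsP; exists y; rewrite h2 eqxx. Qed.

Lemma walk3I (T : finType) (e : rel T) x a b y : e x a -> e a b -> e b y -> walkb e 3 x y.
Proof. by move=> h1 h2 h3; apply/existsP; exists a; apply/andP; split=> //; exact: walk2I h2 h3. Qed.

Lemma walk2E (T : finType) (e : rel T) x y : walkb e 2 x y -> exists z, e x z && e z y.
Proof. by case/existsP=> z /andP[h1 /existsP[w /andP[h2 /eqP <-]]]; exists z; rewrite h1. Qed.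

Lemma fresh n (i j : 'I_n) : 3 <= n -> exists k : 'I_n, (k != i) && (k != j).
Proof.
move=> n3.
have : 0 < #|~: [set i; j]|.
  have := cardsC [set i; j]; rewrite card_ord.
  have := cards2 i j.
  case: (i != j) => /= ->; lia.
case/card_gt0P=> k; rewrite !inE negb_or => hk; by exists k.
Qed.
Arguments fresh {n}.

Ltac brute_ord :=
  repeat match goal with
  | H : is_true (~~ (?a == ?a)) |- _ => by rewrite eqxx in H
  | |- context [@eq_op ?T ?a ?a] => rewrite eqxx
  | |- context [@eq_op ?T ?a ?b] =>
      is_var a; is_var b;
      let H := fresh "H" in
      case: (eqVneq a b) => H;
      [ subst b
      | let H' := fresh "H" in
        have H' : (b == a) = false by rewrite eq_sym (negbTE H);
        rewrite ?(negbTE H) ?H' ]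
  end.

Definition PV n m := ((bool * 'I_n) * (bool * 'I_m))%type.
Definition E n m : rel (PV n m) := modprod (KnnM n) (KnnM m).
Arguments E {n m}.

Definition sflip n m (u v : PV n m) : bool :=
  ((u.1.1 != v.1.1) && (u.1.2 == v.1.2) && (u.2 == v.2)) ||
  ((u.1 == v.1) && (u.2.1 != v.2.1) && (u.2.2 == v.2.2)).
Arguments sflip {n m}.

Definition Dist n m (u v : PV n m) : nat :=
  if u == v then 0 else if E u v then 1 else if sflip u v then 3 else 2.
Arguments Dist {n m}.

Lemma no_common1 n m su sw tu tw (iu iw : 'I_n) (ju jw : 'I_m) :
  E ((su, iu), (tu, ju)) ((sw, iw), (tw, jw)) && E ((sw, iw), (tw, jw)) ((~~ su, iu), (tu, ju)) = false.
Proof.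
rewrite /E /modprod /KnnM /= !xpair_eqE.
by case: su; case: sw; case: tu; case: tw; brute_ord.
Qed.

Lemma no_common2 n m su sw tu tw (iu iw : 'I_n) (ju jw : 'I_m) :
  E ((su, iu), (tu, ju)) ((sw, iw), (tw, jw)) && E ((sw, iw), (tw, jw)) ((su, iu), (~~ tu, ju)) = false.
Proof.
rewrite /E /modprod /KnnM /= !xpair_eqE.
by case: su; case: sw; case: tu; case: tw; brute_ord.
Qed.

Lemma two_witness n m su sv tu tv (iu iv k1 : 'I_n) (ju jv k2 : 'I_m) :
  k1 != iu -> k1 != iv -> k2 != ju -> k2 != jv ->
  ((su, iu), (tu, ju)) != ((sv, iv), (tv, jv)) ->
  ~~ E ((su, iu), (tu, ju)) ((sv, iv), (tv, jv)) ->
  ~~ sflip ((su, iu), (tu, ju)) ((sv, iv), (tv, jv)) ->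
  ~~ (E ((su, iu), (tu, ju)) ((su, k1), (tu, k2)) && E ((su, k1), (tu, k2)) ((sv, iv), (tv, jv))) ->
  E ((su, iu), (tu, ju)) ((~~ su, iu), (tu, k2)) && E ((~~ su, iu), (tu, k2)) ((sv, iv), (tv, jv)).
Proof.
move=> h1 h2 h3 h4.
rewrite /E /sflip /modprod /KnnM /= !xpair_eqE.
by case: su; case: sv; case: tu; case: tv; brute_ord.
Qed.

Lemma card_PV n m : #|{: PV n m}| = 4 * n * m.
Proof. rewrite /PV !card_prod !card_bool !card_ord; lia. Qed.

Lemma gdistE n m (u v : PV n m) : 3 <= n -> 3 <= m ->
  gdist (modprod (KnnM n) (KnnM m)) u v = Dist u v.
Proof.
move=> n3 m3.
have c3 : 3 < #|{: PV n m}| by rewrite card_PV; nia.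
rewrite /Dist; case: (eqVneq u v) => [->|uv].
  apply: gdist_char => //; [by apply: leq_ltn_trans c3 | by rewrite /= eqxx].
case: ifP => Euv.
  apply: gdist_char => //; [by apply: leq_ltn_trans c3 | by rewrite walk1E |].
  by case=> // _; rewrite /= uv.
have nw1 : ~~ walkb (modprod (KnnM n) (KnnM m)) 1 u v by rewrite walk1E; apply: negbT.
move: u v uv Euv nw1 => [[su iu] [tu ju]] [[sv iv] [tv jv]] uv Euv nw1.
case: ifP => Sf.
  apply: gdist_char => //.
    move: Sf; rewrite /sflip /= !xpair_eqE => /orP[/andP[/andP[sd /eqP <-] /andP[/eqP <- /eqP <-]]|
                                              /andP[/andP[/andP[/eqP <- /eqP <-] sd] /eqP <-]].
      have -> : sv = ~~ su by move: sd; case: (su); case: (sv).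
      have [k /andP[k1 _]] := fresh iu iu n3.
      have [k' /andP[k'1 k'2]] := fresh iu k n3.
      apply: (@walk3I _ _ _ ((~~ su, k), (tu, ju)) ((su, k'), (tu, ju))).
      - by move: k1 k'1 k'2; rewrite /modprod /KnnM /= !xpair_eqE; case: (su); case: (tu); brute_ord.
      - by move: k1 k'1 k'2; rewrite /modprod /KnnM /= !xpair_eqE; case: (su); case: (tu); brute_ord.
      - by move: k1 k'1 k'2; rewrite /modprod /KnnM /= !xpair_eqE; case: (su); case: (tu); brute_ord.
    have -> : tv = ~~ tu by move: sd; case: (tu); case: (tv).
    have [k /andP[k1 _]] := fresh ju ju m3.
    have [k' /andP[k'1 k'2]] := fresh ju k m3.
    apply: (@walk3I _ _ _ ((su, iu), (~~ tu, k)) ((su, iu), (tu, k'))).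
    - by move: k1 k'1 k'2; rewrite /modprod /KnnM /= !xpair_eqE; case: (su); case: (tu); brute_ord.
    - by move: k1 k'1 k'2; rewrite /modprod /KnnM /= !xpair_eqE; case: (su); case: (tu); brute_ord.
    - by move: k1 k'1 k'2; rewrite /modprod /KnnM /= !xpair_eqE; case: (su); case: (tu); brute_ord.
  case=> [|[|[|//]]] _ //=.
  apply/negP => /walk2E [[[sw iw] [tw jw]]].
  move: Sf; rewrite /sflip /= !xpair_eqE => /orP[/andP[/andP[sd /eqP <-] /andP[/eqP <- /eqP <-]]|
                                              /andP[/andP[/andP[/eqP <- /eqP <-] sd] /eqP <-]].
    have -> : sv = ~~ su by move: sd; case: (su); case: (sv).
    by rewrite (no_common1 su sw tu tw iu iw ju jw).
  have -> : tv = ~~ tu by move: sd; case: (tu); case: (tv).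
  by rewrite (no_common2 su sw tu tw iu iw ju jw).
apply: gdist_char; first by apply: ltnW.
  have [k1 /andP[k11 k12]] := fresh iu iv n3.
  have [k2 /andP[k21 k22]] := fresh ju jv m3.
  case H: (E ((su, iu), (tu, ju)) ((su, k1), (tu, k2)) &&
           E ((su, k1), (tu, k2)) ((sv, iv), (tv, jv))).
    by case/andP: H => h1 h2; apply: walk2I h1 h2.
  have /andP[h1 h2] := two_witness k11 k12 k21 k22 uv (negbT Euv) (negbT Sf) (negbT H).
  by apply: walk2I h1 h2.
by case=> [|[|//]] _ //=; rewrite uv.
Qed.

Lemma Dist_block n m sx sy sz tx ty tz (i iz : 'I_n) (j jz : 'I_m) :
  let x := ((sx, i), (tx, j)) in let y := ((sy, i), (ty, j)) in
  let z := ((sz, iz), (tz, jz)) in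
  x != y ->
  (Dist y z == Dist y x + Dist x z) || (Dist x z == Dist x y + Dist y z) ->
  (z == x) || (z == y).
Proof.
rewrite /= /Dist /E /sflip /modprod /KnnM /= !xpair_eqE.
by case: sx; case: sy; case: sz; case: tx; case: ty; case: tz; brute_ord.
Qed.

Lemma Dist_up n m (ix iy : 'I_n) (jx jy : 'I_m) :
  let x := ((false, ix), (false, jx)) in let y := ((false, iy), (false, jy)) in
  let z := ((true, iy), (false, jy)) in
  x != y -> (Dist y z == Dist y x + Dist x z).
Proof.
rewrite /= /Dist /E /sflip /modprod /KnnM /= !xpair_eqE.
by brute_ord.
Qed.

Lemma lower_bound n m (S : {set PV n m}) : 3 <= n -> 3 <= m ->
  strong_resolving (modprod (KnnM n) (KnnM m)) S -> 3 * n * m <= #|S|.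
Proof.
move=> n3 m3 /forallP HS.
have inj : {in ~: S &, injective (fun v : PV n m => (v.1.2, v.2.2))}.
  move=> [[sx i] [tx j]] [[sy i'] [ty j']]; rewrite !inE => xS yS /= [ei ej].
  move: i' j' ei ej yS => _ _ <- <- yS.
  apply/eqP; apply/negP => /negP xy.
  have /forallP := HS ((sx, i), (tx, j)).
  move=> /(_ ((sy, i), (ty, j))); rewrite xy /= => /existsP [[[sz iz] [tz jz]] /andP[zS]].
  rewrite !gdistE // => /(Dist_block xy) /orP[] /eqP ez.
    by move: xS; rewrite -ez zS.
  by move: yS; rewrite -ez zS.
have := @leq_card_in _ _ _ (~: S) inj; rewrite card_prod !card_ord => h.
have := cardsC S; rewrite card_PV; nia.
Qed.

Definition S0 n m : {set PV n m} := [set v : PV n m | v.1.1 || v.2.1].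


Lemma card_S0 n m : #|S0 n m| = 3 * n * m.
Proof.
have h : #|~: S0 n m| = n * m.
  have -> : ~: S0 n m = [set ((false, p.1), (false, p.2)) | p : 'I_n * 'I_m] :> {set PV n m}.
    apply/setP => [[[s i] [t j]]]; rewrite !inE /=.
    apply/idP/imsetP => [|[[i' j'] _ [-> _ -> _]] //].
    by case: s; case: t => //= _; exists (i, j).
  rewrite card_imset ?card_prod ?card_ord //.
  by move=> [i j] [i' j'] [-> ->].
have := cardsC (S0 n m); rewrite card_PV h; nia.
Qed.

Lemma S0_res n m : 3 <= n -> 3 <= m ->
  strong_resolving (modprod (KnnM n) (KnnM m)) (S0 n m).
Proof.
move=> n3 m3; apply/forallP => x; apply/forallP => y; apply/implyP => xy.
case xS: (x \in S0 n m).
  apply/existsP; exists x; rewrite xS /= !gdistE // /Dist eqxx addn0 eqxx //.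
case yS: (y \in S0 n m).
  apply/existsP; exists y; rewrite yS /= !gdistE // /Dist eqxx addn0 eqxx orbT //.
move: x y xy xS yS => [[sx ix] [tx jx]] [[sy iy] [ty jy]] xy xS yS.
move: xS yS xy; rewrite !inE /= => /norP[/negbTE -> /negbTE ->] /norP[/negbTE -> /negbTE ->] xy.
apply/existsP; exists ((true, iy), (false, jy)); rewrite inE /= !gdistE //.
by rewrite (Dist_up xy).
Qed.

Theorem mainTheorem14 (n m : nat) :
  3 <= n -> 3 <= m ->
  sdim (modprod (KnnM n) (KnnM m)) = 3 * n * m.
Proof.
move=> n3 m3; apply: find_iota0.
- rewrite ltnS card_PV; nia.
- by apply/existsP; exists (S0 n m); rewrite S0_res // card_S0 eqxx.
- move=> k lt; apply/negP => /existsP [S /andP[res /eqP cS]].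
  have := lower_bound n3 m3 res; rewrite cS; lia.
Qed.
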